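(* Let $U$ be the distribution function of a sub-probability measure on $(0,\infty)$, set $\hat U(\lambda)=\int_0^\infty e^{-\lambda x}\,dU(x)$, and let $p>0$. (a) If for some $C_2>0$, $\hat U(\lambda)\le C_2\lambda^{-p}$ for all $\lambda>0$, then $U(a)\le eC_2a^p$ for all $a>0$. (b) Assume $\hat U(\lambda)\le C_2\lambda^{-p}$ for all $\lambda>0$ and, for some $C_1>0$ and $\underline\lambda\ge0$, $\hat U(\lambda)\ge C_1\lambda^{-p}$ for all $\lambda>\underline\lambda$. If \[d_1=\frac{C_1}2\Bigl(2\log\Bigl(\Bigl(\frac{2p}e\Bigr)^p\frac{4eC_2}{C_1}\Bigr)\vee2p\vee\underline\lambda\Bigr)^{-p},\] then $U(a)\ge d_1a^p$ for all $a\in[0,1]$. In particular, if $p\le1$ and $\underline\lambda\le4$, then \[U(a)\ge\frac{C_1}4\Bigl(\log\Bigl(\frac{4eC_2}{C_1}\Bigr)\Bigr)^{-1}a^p\quad\text{for all }a\in[0,1].\] *)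

(* Defs.v *)
From HB Require Import structures.
From mathcomp Require Import all_boot all_order all_algebra.
From mathcomp Require Import all_classical all_reals all_analysis.
Set Implicit Arguments. Unset Strict Implicit. Unset Printing Implicit Defensive.
Import Order.TTheory GRing.Theory Num.Theory.
Local Open Scope classical_set_scope.
Local Open Scope ring_scope.

Definition subprob_on_pos (R : realType) (mu : {measure set R -> \bar R}) : Prop :=
  (mu setT <= 1)%E /\ mu (~` `]0%R, +oo[%classic) = 0%E.

Definition distU (R : realType) (mu : {measure set R -> \bar R}) (a : R) : \bar R :=
  mu `]-oo, a]%classic.

Definition laplaceU (R : realType) (mu : {measure set R -> \bar R}) (l : R) : \bar R :=
  (\int[mu]_(x in `]0%R, +oo[%classic) (expR (- (l * x)))%:E)%E.

(* Main.v *)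
Require Import Defs.
From HB Require Import structures.
From mathcomp Require Import all_boot all_order all_algebra.
From mathcomp Require Import all_classical all_reals all_analysis.
Import Order.TTheory GRing.Theory Num.Theory.
From mathcomp Require Import measurable_realfun ring lra.
Local Open Scope classical_set_scope.
Local Open Scope ring_scope.

Lemma mexp (R : realType) (l : R) (D : set R) : measurable_fun D (fun x : R => (expR (- (l*x)))%:E : \bar R).
Proof.
apply/measurable_EFinP.
apply: measurableT_comp => //.
have ->: (fun x => -(l*x)) = ( *%R (-l)) by apply/funext => x; rewrite mulNr.
exact: measurable_realfun.mulrl_measurable.
Qed.

Lemma mind (R : realType) (A D : set R) : measurable A ->
  measurable_fun D (fun x : R => (\1_A x : R)%:E : \bar R).
Proof.
move=> mA; apply/measurable_EFinP.
exact: measurable_realfun.measurable_indic.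
Qed.
Lemma key (R : realType) (mu : {measure set R -> \bar R}) (l a : R) : 0 < l -> 0 < a ->
 (laplaceU mu l <= mu (`]0%R,a]%classic `&` `]0%R,+oo[%classic)
    + (expR (-(l*a)/2))%:E * laplaceU mu (l/2))%E.
Proof.
move=> l0 a0.
rewrite /laplaceU.
set D := `]0%R,+oo[%classic.
have mD : measurable D by exact: measurable_itv.
have mA : measurable `]0%R,a]%classic by exact: measurable_itv.
rewrite -integral_indic // -ge0_integralZl //.
all: try (by move=> x _; rewrite lee_fin expR_ge0).
all: try exact: mexp.
all: try (by rewrite lee_fin expR_ge0).
rewrite -ge0_integralD //.
all: try (by move=> x _; rewrite lee_fin indicE; case: (_ \in _)).
all: try exact: mind.
all: try (by move=> x _; rewrite -EFinM lee_fin mulr_ge0 // expR_ge0).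
all: try (apply: emeasurable_funM => //; exact: mexp).
apply: ge0_le_integral => //.
all: try (by move=> x _; rewrite lee_fin expR_ge0).
all: try exact: mexp.
all: try (apply: emeasurable_funD => //; [exact: mind| apply: emeasurable_funM => //; exact: mexp]).
move=> x Dx.
rewrite -EFinM -EFinD lee_fin indicE.
have x0 : 0 < x by move: Dx; rewrite /D /= in_itv /= andbT.
case: (lerP x a) => xa.
- have -> : x \in `]0%R, a]%classic by rewrite inE /= in_itv /= x0 xa.
  have e1 : expR (- (l * x)) <= 1.
    by rewrite -expR0 ler_expR oppr_le0 mulr_ge0 // ltW.
  have e2 : 0 <= expR (- (l * a) / 2) * expR (- (l / 2 * x)).
    by rewrite mulr_ge0 // expR_ge0.
  rewrite /=; lra.
- have -> : x \in `]0%R, a]%classic = false.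
    by apply/negbTE/negP; rewrite inE /= in_itv /= => /andP[_]; rewrite leNgt xa.
  rewrite add0r -expRD ler_expR.
  have : l * a < l * x by rewrite ltr_pM2l.
  lra.
Qed.

Lemma lowA (R : realType) (mu : {measure set R -> \bar R}) (l a : R) : 0 < l -> 0 < a ->
 ((expR (-(l*a)))%:E * mu (`]0%R,a]%classic `&` `]0%R,+oo[%classic) <= laplaceU mu l)%E.
Proof.
move=> l0 a0.
rewrite /laplaceU.
set D := `]0%R,+oo[%classic.
have mD : measurable D by exact: measurable_itv.
have mA : measurable `]0%R,a]%classic by exact: measurable_itv.
rewrite -integral_indic // -ge0_integralZl //.
all: try (by move=> x _; rewrite lee_fin indicE; case: (_ \in _)).
all: try exact: mind.
all: try (by rewrite lee_fin expR_ge0).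
apply: ge0_le_integral => //.
all: try (by move=> x _; rewrite -EFinM lee_fin mulr_ge0 // ?expR_ge0 // indicE; case: (_ \in _)).
all: try exact: mexp.
all: try (apply: emeasurable_funM => //; exact: mind).
move=> x Dx.
rewrite -EFinM lee_fin indicE.
case: (boolP (x \in _)) => xa.
- move: xa; rewrite inE /= in_itv /= => /andP[x0 xa].
  rewrite mulr1 ler_expR lerN2.
  by rewrite ler_pM2l.
- by rewrite mulr0 expR_ge0.
Qed.

Lemma finmu (R : realType) (mu : {measure set R -> \bar R}) (A : set R) :
  subprob_on_pos mu -> measurable A -> mu A \is a fin_num.
Proof.
move=> [h1 _] mA; rewrite ge0_fin_numE //.
apply: (le_lt_trans (y := mu setT)).
  by apply: le_measure => //; rewrite inE.
by apply: (le_lt_trans h1); rewrite ltry.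
Qed.

Lemma inv_powR (R : realType) (x p : R) : 0 <= x -> (x^-1) `^ (-p) = x `^ p.
Proof. by move=> x0; rewrite -powR_inv1 // -powRrM mulN1r opprK. Qed.

Lemma distU_le (R : realType) (mu : {measure set R -> \bar R}) (a : R) :
  subprob_on_pos mu ->
  (distU mu a <= mu (`]0%R,a]%classic `&` `]0%R,+oo[%classic))%E.
Proof.
move=> [_ h2]; rewrite /distU.
have mD : measurable (`]0%R,+oo[%classic : set R) by exact: measurable_itv.
have mA : measurable (`]0%R,a]%classic : set R) by exact: measurable_itv.
apply: (le_trans (y := mu ((`]0%R,a]%classic `&` `]0%R,+oo[%classic) `|` ~` `]0%R,+oo[%classic))).
  apply: le_measure; rewrite ?inE //.
  - by apply: measurableU; [exact: measurableI|exact: measurableC].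
  move=> x /=; rewrite in_itv /= => xa.
  case: (ltP 0 x) => x0.
    by left; split; rewrite /= in_itv /= ?x0 ?xa //.
  by right; rewrite /= in_itv /= andbT; apply/negP; rewrite -leNgt.
apply: (le_trans (measureU2 _ _ _)).
- exact: measurableI.
- exact: measurableC.
have h3 : (mu (~` `]0%R,+oo[%classic) <= 0)%E by rewrite h2.
apply: (le_trans (y := (mu (`]0%R,a]%classic `&` `]0%R,+oo[%classic) + 0)%E)); last by rewrite adde0.
apply: leeD => //; exact: h3.
Qed.

Lemma le_distU (R : realType) (mu : {measure set R -> \bar R}) (a : R) :
  (mu (`]0%R,a]%classic `&` `]0%R,+oo[%classic) <= distU mu a)%E.
Proof.
rewrite /distU; apply: le_measure; rewrite ?inE //.
- by apply: measurableI; exact: measurable_itv.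
move=> x [] /=; rewrite !in_itv /= => /andP[_ ->] _ //.
Qed.
Lemma e_le4 (R : realType) : expR 1 <= 4 :> R.
Proof.
have h : 1/2 <= expR (-(1/2)) :> R by have := expR_ge1Dx (-(1/2) : R); lra.
have h2 : expR (1/2) * expR (-(1/2)) = 1 :> R by rewrite -expRD subrr expR0.
have h3 : expR 1 = expR (1/2) * expR (1/2) :> R by rewrite -expRD -splitr.
have y0 : 0 < expR (1/2) :> R by exact: expR_gt0.
rewrite h3; set y := expR (1/2) in h2 y0 *; set z := expR (-(1/2)) in h h2.
have : y <= 2 by nra.
nra.
Qed.

Lemma pp_ge (R : realType) (p : R) : 0 < p -> expR (p - 1) <= p `^ p.
Proof.
move=> p0.
rewrite /powR gt_eqF // ler_expR.
have pi : 0 < p^-1 by rewrite invr_gt0.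
have := @le_ln1Dx R (p^-1 - 1) ltac:(lra).
rewrite addrC subrK lnV ?posrE // => h.
have := ler_wpM2l (ltW p0) h.
rewrite mulrBr mulfV ?gt_eqF // mulr1 mulrN => h'.
lra.
Qed.

Lemma Kb (R : realType) (p : R) : 0 < p -> 4 * 2 `^ p <= (2 * p / expR 1) `^ p * (4 * expR 1).
Proof.
move=> p0.
have e0 : 0 < expR 1 :> R by exact: expR_gt0.
have pe : 0 <= p / expR 1 by rewrite divr_ge0 // ltW.
have ei : 0 <= (expR 1)^-1 :> R by rewrite invr_ge0 ltW.
rewrite -mulrA (powRM p (ler0n R 2) pe) (powRM p (ltW p0) ei).
rewrite -expRN -expRM mulN1r.
have h := @pp_ge R p p0.
have q0 : 0 < 2 `^ p :> R by apply: powR_gt0.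
have : expR (p - 1) * expR (- p) * expR 1 = 1 :> R.
  by rewrite -!expRD; rewrite (_ : p - 1 + - p + 1 = 0) ?expR0 //; lra.
have := expR_gt0 (- p); have := expR_gt0 (p - 1).
set A := 2 `^ p in q0 *; set B := p `^ p in h *; set C := expR (- p); set E := expR 1 in e0 *.
set F := expR (p - 1) in h *.
move=> F0 C0 FCE.
have : F * C * E <= B * C * E by rewrite ler_pM2r // ler_pM2r.
nra.
Qed.

Lemma coreb (R : realType) (mu : {measure set R -> \bar R}) (p C2 C1 lam0 s a : R) :
  subprob_on_pos mu -> 0 < p -> 0 < C2 ->
  (forall l : R, 0 < l -> (laplaceU mu l <= (C2 * l `^ (- p))%:E)%E) ->
  (forall l : R, lam0 < l -> ((C1 * l `^ (- p))%:E <= laplaceU mu l)%E) ->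
  0 < s -> 0 < a -> lam0 < s / a ->
  2 * 2 `^ p * C2 * expR (- s / 2) <= C1 ->
  ((C1 / 2 * s `^ (- p) * a `^ p)%:E <= distU mu a)%E.
Proof.
move=> sp p0 C20 hu hl s0 a0 la hc.
set l := s / a.
have l0 : 0 < l by rewrite divr_gt0.
have la_s : l * a = s by rewrite /l divfK ?gt_eqF.
have hk := key R mu l a l0 a0. rewrite la_s in hk.
have mm : measurable (`]0%R,a]%classic `&` `]0%R,+oo[%classic : set R).
  by apply: measurableI; exact: measurable_itv.
have mf := finmu R mu _ sp mm.
apply: (le_trans _ (le_distU R mu a)).
have h1 := le_trans (hl l la) hk.
have h2 : ((expR (-s/2))%:E * laplaceU mu (l/2) <= (expR(-s/2) * (C2 * (l/2)`^(-p)))%:E)%E.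
  rewrite EFinM; apply: lee_wpmul2l; first by rewrite lee_fin expR_ge0.
  by apply: hu; rewrite divr_gt0.
have h3 := le_trans h1 (leeD (lexx _) h2).
move: h3; rewrite -(fineK mf) -EFinD !lee_fin.
set fm := fine _.
rewrite (powRM (- p) (ltW l0) (_ : 0 <= 2^-1)) ?invr_ge0 // inv_powR //.
have hl2 : l `^ (- p) = s `^ (- p) * a `^ p.
  rewrite /l (powRM (- p) (ltW s0) (_ : 0 <= a^-1)) ?invr_ge0 ?ltW //.
  by rewrite inv_powR // ltW.
rewrite hl2.
have S0 : 0 < s `^ (- p) by apply: powR_gt0.
have P0 : 0 < a `^ p by apply: powR_gt0.
have T0 : 0 < 2 `^ p :> R by apply: powR_gt0.
have E0 : 0 < expR (- s / 2) by apply: expR_gt0.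
set S := s `^ (- p) in S0 *; set P := a `^ p in P0 *; set T := 2 `^ p in T0 hc *.
set E := expR (- s / 2) in E0 hc *.
move=> h.
have SP0 : 0 < S * P by apply: mulr_gt0.
have := ler_wpM2r (ltW SP0) hc.
nra.
Qed.

Lemma sup_arg (R : realType) (x y : R) : 0 <= x -> 0 < y ->
  (forall q : R, 0 < q < 1 -> y * q <= x) -> y <= x.
Proof.
move=> x0 y0 h; rewrite leNgt; apply/negP => xy.
have q0 : 0 < (x + y) / (2 * y) by rewrite divr_gt0 ?mulr_gt0 //; lra.
have q1 : (x + y) / (2 * y) < 1 by rewrite ltr_pdivrMr ?mulr_gt0 //; lra.
have := h ((x + y) / (2 * y)); rewrite q0 q1 => /(_ isT).
have -> : y * ((x + y) / (2 * y)) = (x + y) / 2.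
  field; by rewrite gt_eqF.
lra.
Qed.

Lemma distU_mono (R : realType) (mu : {measure set R -> \bar R}) (b a : R) :
  b <= a -> (distU mu b <= distU mu a)%E.
Proof.
move=> ba; rewrite /distU; apply: le_measure; rewrite ?inE; try exact: measurable_itv.
by move=> x /=; rewrite !in_itv /= => xb; apply: le_trans ba.
Qed.

Lemma partb1 (R : realType) (mu : {measure set R -> \bar R}) (p C2 C1 lam0 M : R) :
  subprob_on_pos mu -> 0 < p -> 0 < C2 ->
  (forall l : R, 0 < l -> (laplaceU mu l <= (C2 * l `^ (- p))%:E)%E) ->
  (forall l : R, lam0 < l -> ((C1 * l `^ (- p))%:E <= laplaceU mu l)%E) ->
  0 < C1 -> 0 < M -> lam0 <= M ->
  2 * 2 `^ p * C2 * expR (- M / 2) <= C1 ->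
  forall a : R, 0 <= a <= 1 -> ((C1 / 2 * M `^ (- p) * a `^ p)%:E <= distU mu a)%E.
Proof.
move=> sp p0 C20 hu hl C10 M0 lM hc a /andP[a0 a1].
have mI : measurable (`]-oo, a]%classic : set R) by exact: measurable_itv.
have uf := finmu R mu _ sp mI.
rewrite /distU -(fineK uf) lee_fin.
have fu0 : 0 <= fine (mu `]-oo, a]%classic) by apply: fine_ge0; exact: measure_ge0.
case: (eqVneq a 0) => [->|an0].
  by rewrite powR0 ?mulr0 // gt_eqF.
have a0' : 0 < a by rewrite lt_neqAle eq_sym an0.
have Mp0 : 0 < M `^ (- p) by apply: powR_gt0.
have y0 : 0 < C1 / 2 * M `^ (- p) * a `^ p.
  by rewrite !mulr_gt0 ?invr_gt0 // powR_gt0.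
apply: sup_arg => // q /andP[q0 q1].
set t := q `^ (p^-1).
have t0 : 0 < t by apply: powR_gt0.
have tp : t `^ p = q by rewrite /t -powRrM mulVf ?gt_eqF // powRr1 // ltW.
have t1 : t < 1.
  have pi : 0 < p^-1 by rewrite invr_gt0.
  have h1 : q `^ p^-1 < 1 `^ p^-1.
    by apply: (gt0_ltr_powR pi); rewrite ?inE ?nnegrE ?ltW ?ler01.
  by move: h1; rewrite powR1.
have at0 : 0 < a * t by rewrite mulr_gt0.
have at1 : a * t < 1 by have := ler_wpM2r (ltW t0) a1; lra.
have := @coreb R mu p C2 C1 lam0 M (a * t) sp p0 C20 hu hl M0 at0.
have lt : lam0 < M / (a * t).
  apply: (le_lt_trans lM); rewrite ltr_pdivlMr //.
  by rewrite -[X in _ < X]mulr1 ltr_pM2l.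
move=> /(_ lt hc) h.
have ata : a * t <= a by rewrite -[X in _ <= X]mulr1 ler_pM2l // ltW.
have hh := le_trans h (distU_mono R mu (a * t) a ata).
rewrite /distU -(fineK uf) lee_fin (powRM p (ltW a0') (ltW t0)) tp mulrA in hh.
exact: hh.
Qed.

Theorem lemma4p7 (R : realType) (mu : {measure set R -> \bar R}) (p C2 : R) :
  subprob_on_pos mu -> 0 < p -> 0 < C2 ->
  (forall l : R, 0 < l -> (laplaceU mu l <= (C2 * l `^ (- p))%:E)%E) ->
  (* (a) *)
  (forall a : R, 0 < a -> (distU mu a <= (expR 1 * C2 * a `^ p)%:E)%E) /\
  (* (b) *)
  (forall (C1 lam0 : R), 0 < C1 -> 0 <= lam0 ->
     (forall l : R, lam0 < l -> ((C1 * l `^ (- p))%:E <= laplaceU mu l)%E) ->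
     (let d1 := C1 / 2 *
          (Num.max (Num.max
             (2 * ln ((2 * p / expR 1) `^ p * (4 * expR 1 * C2 / C1)))
             (2 * p)) lam0) `^ (- p) in
      forall a : R, 0 <= a <= 1 -> ((d1 * a `^ p)%:E <= distU mu a)%E) /\
     (p <= 1 -> lam0 <= 4 ->
      forall a : R, 0 <= a <= 1 ->
        ((C1 / 4 * (ln (4 * expR 1 * C2 / C1))^-1 * a `^ p)%:E <= distU mu a)%E)).
Proof.
move=> sp p0 C20 hu; split.
  move=> a a0.
  have l0 : 0 < a^-1 by rewrite invr_gt0.
  have h := le_trans (lowA R mu a^-1 a l0 a0) (hu _ l0).
  rewrite mulVf ?gt_eqF // (inv_powR R a p (ltW a0)) in h.
  have mm : measurable (`]0%R,a]%classic `&` `]0%R,+oo[%classic : set R).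
    by apply: measurableI; exact: measurable_itv.
  have mf := finmu R mu _ sp mm.
  apply: (le_trans (distU_le R mu a sp)).
  move: h; rewrite -(fineK mf) -EFinM !lee_fin => h.
  have e1 : expR 1 * expR (-1) = 1 :> R by rewrite -expRD subrr expR0.
  have e0 : 0 < expR 1 :> R by exact: expR_gt0.
  have := ler_wpM2l (ltW e0) h.
  by rewrite mulrA e1 mul1r mulrA.
move=> C1 lam0 C10 lam00 hl.
set M := Num.max (Num.max
             (2 * ln ((2 * p / expR 1) `^ p * (4 * expR 1 * C2 / C1)))
             (2 * p)) lam0.
have M1 : 2 * ln ((2 * p / expR 1) `^ p * (4 * expR 1 * C2 / C1)) <= M.
  by rewrite /M !le_max lexx.
have M2 : 2 * p <= M by rewrite /M !le_max lexx orbT.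
have M3 : lam0 <= M by rewrite /M !le_max lexx orbT.
have M0 : 0 < M by apply: lt_le_trans M2; rewrite mulr_gt0.
have hc : 2 * 2 `^ p * C2 * expR (- M / 2) <= C1.
  set K := (2 * p / expR 1) `^ p * (4 * expR 1 * C2 / C1).
  have T0 : 0 < 2 `^ p :> R by apply: powR_gt0.
  have hK := Kb R p p0.
  have K0 : 0 < K.
    by rewrite /K mulr_gt0 ?powR_gt0 ?divr_gt0 ?mulr_gt0 ?expR_gt0.
  have hK2 : 4 * 2 `^ p * C2 <= K * C1.
    have eK : K * C1 = (2 * p / expR 1) `^ p * (4 * expR 1) * C2.
      rewrite /K; field; by rewrite gt_eqF.
    by rewrite eK; have := ler_wpM2r (ltW C20) hK.
  have hE : K <= expR (M / 2).
    rewrite -(lnK (_ : K \in Num.pos)) ?posrE // ler_expR.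
    lra.
  have e1 : expR (M / 2) * expR (- M / 2) = 1 by rewrite -expRD mulNr subrr expR0.
  have E0 : 0 < expR (- M / 2) by exact: expR_gt0.
  have := ler_wpM2r (ltW C10) hE.
  set EE := expR (M / 2) in e1 *; set E := expR (- M / 2) in e1 E0 *.
  move=> h.
  have := ler_wpM2r (ltW E0) (le_trans hK2 h).
  have : 0 < C2 * 2 `^ p * E by rewrite !mulr_gt0.
  nra.
have b1 := partb1 R mu p C2 C1 lam0 M sp p0 C20 hu hl C10 M0 M3 hc.
split.
  by move=> /= a ha; exact: b1.
move=> p1 l4 a ha.
apply: le_trans (b1 a ha).
rewrite lee_fin; apply: ler_wpM2r; first exact: powR_ge0.
have C12 : C1 <= C2.
  have l0 : lam0 < lam0 + 1 by lra.
  have := le_trans (hl _ l0) (hu _ (lt_le_trans ltr01 (_ : 1 <= lam0 + 1))).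
  rewrite lee_fin => h.
  have X0 : 0 < (lam0 + 1) `^ (- p) by apply: powR_gt0; lra.
  by rewrite -(ler_pM2r X0) h // ; lra.
have e0 : 0 < expR 1 :> R by exact: expR_gt0.
have e2 : 2 <= expR 1 :> R by have := expR_ge1Dx (1 : R); lra.
have e4 := e_le4 R.
set L := ln (4 * expR 1 * C2 / C1).
have A0 : 0 < 4 * expR 1 * C2 / C1 by rewrite divr_gt0 ?mulr_gt0.
have L2 : 2 <= L.
  rewrite -[X in X <= _](expRK 2) /L ler_ln ?posrE ?expR_gt0 //.
  rewrite (_ : (2 : R) = 1 + 1) // expRD.
  have r1 : 1 <= C2 / C1 by rewrite ler_pdivlMr // mul1r.
  rewrite -(mulrA (4 * expR 1)).
  set r := C2 / C1 in r1 *.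
  nra.
have ML : M <= 2 * L.
  rewrite /M !ge_max; apply/andP; split; first (apply/andP; split).
  - rewrite ler_pM2l // /L ler_ln ?posrE ?mulr_gt0 ?powR_gt0 ?divr_gt0 ?mulr_gt0 ?invr_gt0 //.
    rewrite -[X in _ <= X]mul1r ler_pM2r //.
    have pe : 0 <= 2 * p / expR 1 by rewrite divr_ge0 ?mulr_ge0 // ltW.
    have pe1 : 2 * p / expR 1 <= 1 by rewrite ler_pdivrMr // mul1r; lra.
    have h1 : (2 * p / expR 1) `^ p <= 1 `^ p.
      by apply: (ge0_ler_powR (ltW p0)); rewrite ?nnegrE ?ler01.
    by move: h1; rewrite powR1.
  - lra.
  - lra.
have L0 : 0 < L by lra.
have Mp : (2 * L) `^ (- p) <= M `^ (- p).
  have h2 : M `^ p <= (2 * L) `^ p.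
    by apply: (ge0_ler_powR (ltW p0)); rewrite ?nnegrE; lra.
  have q1 : 0 < M `^ p by apply: powR_gt0.
  have q2 : 0 < (2 * L) `^ p by apply: powR_gt0; lra.
  by rewrite !powRN lef_pV2 ?posrE.
have Lp : (2 * L)^-1 <= (2 * L) `^ (- p).
  have h2 : (2 * L) `^ p <= 2 * L by apply: ler1_powR; lra.
  have q2 : 0 < (2 * L) `^ p by apply: powR_gt0; lra.
  have q3 : 0 < 2 * L by lra.
  by rewrite powRN lef_pV2 ?posrE.
have h : C1 / 2 * (2 * L)^-1 <= C1 / 2 * M `^ (- p).
  by rewrite ler_pM2l ?divr_gt0 //; apply: le_trans Lp Mp.
have -> : C1 / 4 * L^-1 = C1 / 2 * (2 * L)^-1.
  by field; rewrite gt_eqF.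
exact: h.
Qed.
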